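(* Consider an ordered storyline instance and $\Delta,\overline{\Delta}\in\mathbb{N}$. For each $k\in\mathbb{N}$, if there is a $(\Delta,\overline{\Delta})$-nice coordination with total wiggle count $k$, then there is a $(\Delta,\overline{\Delta})$-nice coordination with total wiggle count at most $k$ all of whose coordinates are integers.
   Context: Write $[n]=\{1,\dots,n\}$. An ordered storyline instance consists of characters $\mathcal{C}$, time steps $[\ell]$, meetings $\mathcal{M}$ (each meeting $M$ has a time step $\mathrm{tm}(M)$ and character set $\mathrm{char}(M)$), for each character $c$ a set $A(c)$ of consecutive active time steps, and for each $t$ a permutation $\pi_t$ of the active characters $\mathrm{Ac}(t)=\{c: t\in A(c)\}$ in which the characters of each meeting at time $t$ are consecutive; $c\prec_t c'$ means $c$ precedes $c'$ in $\pi_t$. A coordination assigns a real $y_{t,c}$ to each $t$ and $c\in\mathrm{Ac}(t)$; it is valid if $c\prec_t c'$ implies $y_{t,c}<y_{t,c'}$; it is $(\Delta,\overline{\Delta})$-nice if valid and for all $t$ and all $c,c'$ consecutive in $\pi_t$, $|y_{t,c'}-y_{t,c}|=\Delta$ if $c,c'$ lie in a common meeting at time $t$, and $|y_{t,c'}-y_{t,c}|\ge\overline{\Delta}$ otherwise. The total wiggle count is $\mathrm{WC}(y)=|\{(t,c): 1\le t\le\ell-1,\ c\in\mathrm{Ac}(t)\cap\mathrm{Ac}(t+1),\ y_{t,c}\ne y_{t+1,c}\}|$. *)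

(* Defs.v *)
From HB Require Import structures.
From mathcomp Require Import all_boot all_order all_algebra.
From mathcomp Require Import reals.
Set Implicit Arguments. Unset Strict Implicit. Unset Printing Implicit Defensive.
Import Order.TTheory GRing.Theory Num.Theory.
Local Open Scope ring_scope.

(* Time steps are the naturals 1..ell.
   A meeting M is a pair (tm M, char M).
   active c t  <->  t \in A(c).
   perm_at t   is the permutation pi_t, listed from first to last. *)
Record storyline (C : finType) := Storyline {
  ell : nat;
  meetings : seq (nat * {set C});
  active : C -> nat -> bool;
  perm_at : nat -> seq C }.

Definition in_time (C : finType) (I : storyline C) (t : nat) : bool :=
  (1 <= t <= ell I)%N.

Definition wf_storyline (C : finType) (I : storyline C) : Prop :=
  (forall c t, active I c t -> in_time I t) /\
  (forall c t1 t2 t, active I c t1 -> active I c t2 ->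
      (t1 <= t <= t2)%N -> active I c t) /\
  (forall t, in_time I t ->
      uniq (perm_at I t) /\ forall c, (c \in perm_at I t) = active I c t) /\
  (forall M, M \in meetings I ->
      in_time I M.1 /\
      exists s, infix s (perm_at I M.1) /\ forall c, (c \in s) = (c \in M.2)).

Definition common_meeting (C : finType) (I : storyline C) (t : nat) (c c' : C) :=
  has (fun M : nat * {set C} => [&& M.1 == t, c \in M.2 & c' \in M.2])
      (meetings I).

Definition prec (C : finType) (I : storyline C) (t : nat) (c c' : C) : bool :=
  [&& c \in perm_at I t, c' \in perm_at I t &
      (index c (perm_at I t) < index c' (perm_at I t))%N].

(* A coordination: y t c is meaningful only for t in [ell], c in Ac(t). *)
Definition valid (R : realType) (C : finType) (I : storyline C)
    (y : nat -> C -> R) : Prop :=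
  forall t c c', in_time I t -> prec I t c c' -> y t c < y t c'.

Definition nice (R : realType) (C : finType) (I : storyline C)
    (D Db : R) (y : nat -> C -> R) : Prop :=
  valid I y /\
  forall t c c' s1 s2, in_time I t ->
    perm_at I t = s1 ++ c :: c' :: s2 ->
    (if common_meeting I t c c' then `|y t c' - y t c| = D
     else Db <= `|y t c' - y t c|).

Definition wiggle_count (R : realType) (C : finType) (I : storyline C)
    (y : nat -> C -> R) : nat :=
  (\sum_(1 <= t < ell I)
     #|[set c | [&& active I c t, active I c t.+1 & y t c != y t.+1 c]]|)%N.

Definition integral_coord (R : realType) (C : finType) (I : storyline C)
    (y : nat -> C -> R) : Prop :=
  forall t c, in_time I t -> active I c t -> exists z : int, y t c = z%:~R.

(* Main.v *)
Require Import Defs.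
From HB Require Import structures.
From mathcomp Require Import all_boot all_order all_algebra.
From mathcomp Require Import reals.
From mathcomp Require Import zify.
Import Order.TTheory GRing.Theory Num.Theory.
Local Open Scope ring_scope.

Lemma chain_sorted (R : realType) (C : eqType) (f : C -> R) (s : seq C) :
  (forall s1 s2 a b, s = s1 ++ a :: b :: s2 -> f a < f b) ->
  sorted (fun a b => f a < f b) s.
Proof.
case: s => // a s; elim: s a => //= b s IH a H.
rewrite (H [::] s a b erefl) /=.
apply: IH => s1 s2 x z E; apply: (H (a :: s1) s2); by rewrite E.
Qed.

Lemma floor_addn (R : realType) (x : R) (n : nat) :
  Num.floor (x + n%:R) = (Num.floor x + n%:Z)%R.
Proof.
rewrite floorDrz ?natr_int //; congr (_ + _).
by rewrite pmulrn intrKfloor.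
Qed.

Lemma consec_prec (C : finType) (I : storyline C) t s1 s2 c c' :
  uniq (perm_at I t) -> perm_at I t = s1 ++ c :: c' :: s2 -> prec I t c c'.
Proof.
move=> U E; rewrite /prec E !mem_cat !inE !eqxx /= orbT.
move: U; rewrite E cat_uniq => /and3P [_ H1 H2].
move: H2 => /= /andP [nc _]; rewrite inE negb_or in nc; case/andP: nc => nc _.
have cn : c \notin s1 by apply/negP => h; move/hasP: H1; apply; exists c => //; rewrite !inE eqxx.
have cn' : c' \notin s1 by apply/negP => h; move/hasP: H1; apply; exists c' => //; rewrite !inE eqxx orbT.
rewrite !index_cat (negbTE cn) (negbTE cn') /= eqxx.
rewrite eq_sym (negbTE nc) /=.
rewrite addn0; lia.
Qed.

Theorem lemma11 (R : realType) (C : finType) (I : storyline C)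
    (D Db : nat) (k : nat) :
  wf_storyline I -> (0 < Db)%N ->
  forall y : nat -> C -> R,
    nice I D%:R Db%:R y -> wiggle_count I y = k ->
    exists y' : nat -> C -> R,
      [/\ nice I D%:R Db%:R y', (wiggle_count I y' <= k)%N &
          integral_coord I y'].
Proof.
move=> [_ [_ [Hperm _]]] Db0 y [Hv Hn] Hk.
pose y' := fun t c => ((Num.floor (y t c))%:~R : R).
have gap : forall t c c' s1 s2, in_time I t ->
    perm_at I t = s1 ++ c :: c' :: s2 ->
    (if common_meeting I t c c' then y' t c' - y' t c = D%:R
     else Db%:R <= y' t c' - y' t c) /\ y' t c < y' t c'.
  move=> t c c' s1 s2 It E.
  have lt : y t c < y t c' by apply: Hv => //; apply: consec_prec E; case: (Hperm t It).
  have := Hn t c c' s1 s2 It E.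
  have d0 : 0 < y t c' - y t c by rewrite subr_gt0.
  rewrite (gtr0_norm d0).
  case: ifP => _ h.
  - have e : y t c' = y t c + D%:R by rewrite -h addrC subrK.
    rewrite /y' e floor_addn rmorphD /= addrC addKr -pmulrn.
    split => //; rewrite ltrDl.
    have : (0 : R) < D%:R by rewrite -h subr_gt0.
    by rewrite !ltr0n.
  - have e : y t c + Db%:R <= y t c' by rewrite -lerBrDl.
    have fl := le_floor e; rewrite floor_addn in fl.
    have h2 : Db%:R <= y' t c' - y' t c.
      rewrite lerBrDl /y'.
      have := fl; rewrite -(ler_int R) rmorphD /= -pmulrn => fl'.
      exact: fl'.
    split => //; rewrite -subr_gt0; apply: lt_le_trans h2; by rewrite ltr0n.
exists y'; split.
- split.
  + move=> t c c' It /and3P [cin c'in idx].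
    have [U _] := Hperm t It.
    have S : sorted (fun a b => y' t a < y' t b) (perm_at I t).
      apply: chain_sorted => s1 s2 a b E; exact: (gap t a b s1 s2 It E).2.
    apply: (sorted_ltn_index _ S) => //.
    by move=> a b d /=; apply: lt_trans.
  + move=> t c c' s1 s2 It E.
    have [g l] := gap t c c' s1 s2 It E.
    have d0 : 0 < y' t c' - y' t c by rewrite subr_gt0.
    rewrite (gtr0_norm d0); by case: ifP g.
- rewrite -Hk /wiggle_count; apply: leq_sum => t _.
  apply: subset_leq_card; apply/subsetP => c; rewrite !inE.
  case/and3P => -> -> /=; apply: contra => /eqP e; by rewrite /y' e.
- by move=> t c _ _; exists (Num.floor (y t c)).
Qed.
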